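(* Let $P=MN_P$ be a standard parabolic subgroup of $G$, $\pi\in\Pi_{\mathrm{disc}}(M)$, let $Q\subset R$ be standard parabolic subgroups of $G$ and let $w\in{}_QW_P$ with $P_\pi\subset P_w$. Then for every $\gamma^\vee\in\Delta_R^\vee\cap w\mathfrak a_0^P$ we have $\langle w\nu^P_{P_w},\gamma^\vee\rangle<0$.
   Context: $F$ is a number field, $G=\mathrm{GL}_n$ over $F$, $P_0$ the upper triangular Borel, $W\cong\mathfrak S_n$ the Weyl group, $\mathfrak a_0=\mathbb R^n$ with standard inner product, identified with its dual. For standard $S$: $\mathfrak a_S\subset\mathfrak a_0$, $\mathfrak a_0^S$ is the orthogonal complement of $\mathfrak a_S$ (kernel of the projection $\mathfrak a_0\to\mathfrak a_S$), $\Delta_S^\vee$ the set of simple coroots of $S$ (projections to $\mathfrak a_S$ of the coroots of simple roots of $P_0$ not in $M_S$), $\rho_S^{S'}$ for $S\subset S'$ the half-sum of roots of $A_S$ in $M_{S'}\cap N_S$. ${}_QW_P$ is the set of $w\in W$ with $M_P\cap w^{-1}P_0w=M_P\cap P_0$ and $M_Q\cap wP_0w^{-1}=M_Q\cap P_0$; $P_w=(M_P\cap w^{-1}Qw)N_P$. $\Pi_{\mathrm{disc}}(M)$ is the set of discrete automorphic representations of $M(\mathbb A)$ with central character trivial on $A_M^\infty$. Write $M=G_{n_1}\times\dots\times G_{n_k}$, $\pi=\boxtimes_i\pi_i$; by Moeglin–Waldspurger there are integers $r_i,d_i$ with $n_i=r_id_i$ and cuspidal $\sigma_i$ of $\mathrm{GL}_{r_i}$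 with $\pi_i$ the residual representation attached to $\sigma_i^{\otimes d_i}$; $P_\pi\subset P$ is the standard parabolic with $P_\pi\cap M=\prod P_{\pi_i}$, $P_{\pi_i}$ standard in $\mathrm{GL}_{n_i}$ with Levi $\mathrm{GL}_{r_i}^{d_i}$. For $P_\pi\subset S\subset P$ with $S\cap M=\prod S_i$, $\nu^P_S=(-\rho^{\mathrm{GL}_{n_i}}_{S_i}/r_i)_i\in\mathfrak a_S^{P,*}$. *)

(* Defs.v *)
(* Combinatorial model of GL_n: a_0 = R^n with R any real field. *)
From mathcomp Require Import all_boot all_order all_fingroup all_algebra.
Set Implicit Arguments. Unset Strict Implicit. Unset Printing Implicit Defensive.
Import Order.TTheory GRing.Theory Num.Theory.
Local Open Scope ring_scope.

(* Simple roots of GL_n: j : 'I_n.-1 stands for alpha_j = e_j - e_{j+1}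
   (0-based coordinates).  A standard parabolic S is encoded by the set
   B_S of simple roots NOT in its Levi M_S ("break points").  S ⊂ S' iff
   B_S' \subset B_S. *)

Lemma ltn_lo n (j : 'I_n.-1) : (j < n)%N.
Proof. case: n j => [|n] [j hj] //=; exact: (leq_trans hj). Qed.
Lemma ltn_hi n (j : 'I_n.-1) : (j.+1 < n)%N.
Proof. case: n j => [|n] [j hj] //=. Qed.

Definition lo n (j : 'I_n.-1) : 'I_n := Ordinal (ltn_lo j).
Definition hi n (j : 'I_n.-1) : 'I_n := Ordinal (ltn_hi j).

Definition sameblk n (B : {set 'I_n.-1}) (i k : 'I_n) : bool :=
  [forall j : 'I_n.-1, (j \in B) ==> ~~ ((minn i k <= j)%N && (j < maxn i k)%N)].

Definition bsize n (B : {set 'I_n.-1}) (i : 'I_n) : nat :=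
  #|[pred k : 'I_n | sameblk B i k]|.
Definition bpos n (B : {set 'I_n.-1}) (i : 'I_n) : nat :=
  #|[pred k : 'I_n | sameblk B i k && (k < i)%N]|.

Section Vec.
Variable R : realFieldType.
Variable n : nat.

Definition vec := 'I_n -> R.

Definition dot (x y : vec) : R := \sum_(i < n) x i * y i.

Definition rootvec (a b : 'I_n) : vec := fun i => (i == a)%:R - (i == b)%:R.

Definition coroot (j : 'I_n.-1) : vec := rootvec (lo j) (hi j).

(* orthogonal projection a_0 -> a_S (average on each block) *)
Definition proj (B : {set 'I_n.-1}) (x : vec) : vec :=
  fun i => (bsize B i)%:R^-1 * \sum_(k < n | sameblk B i k) x k.

(* a_0^S = kernel of the projection a_0 -> a_S *)
Definition in_a0 (B : {set 'I_n.-1}) (x : vec) : Prop := forall i, proj B x i = 0.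

(* Weyl group action: w e_a = e_{w a} *)
Definition wact (w : 'S_n) (x : vec) : vec := fun i => x ((w^-1)%g i).

(* rho_S^{S'}: half-sum of the roots of A_S in M_{S'} ∩ N_S, as element of a_S *)
Definition rho (BS BS' : {set 'I_n.-1}) : vec :=
  proj BS (fun i => 2^-1 * \sum_(a < n) \sum_(b < n |
     [&& (a < b)%N, sameblk BS' a b & ~~ sameblk BS a b]) rootvec a b i).

(* nu^P_S = (-rho^{GL_{n_i}}_{S_i} / r_i)_i, where r i is the r_j of the
   P-block containing coordinate i *)
Definition nu (BP : {set 'I_n.-1}) (r : 'I_n -> nat) (BS : {set 'I_n.-1}) : vec :=
  fun i => - rho BS BP i / (r i)%:R.
End Vec.

Definition inWQP n (BQ BP : {set 'I_n.-1}) (w : 'S_n) : Prop :=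
  (forall a b : 'I_n, (a < b)%N -> sameblk BP a b -> (w a < w b)%N) /\
  (forall a b : 'I_n, (a < b)%N -> sameblk BQ a b -> ((w^-1)%g a < (w^-1)%g b)%N).

(* P_w = (M_P ∩ w^{-1} Q w) N_P: simple root alpha_j lies in its Levi iff
   alpha_j is in M_P and w alpha_j is a root of M_Q *)
Definition Pw n (BP BQ : {set 'I_n.-1}) (w : 'S_n) : {set 'I_n.-1} :=
  [set j : 'I_n.-1 | (j \in BP) || ~~ sameblk BQ (w (lo j)) (w (hi j))].

(* P_pi: each P-block of size n_i = r_i d_i is cut into d_i blocks of size r_i *)
Definition Ppi n (BP : {set 'I_n.-1}) (r : 'I_n -> nat) : {set 'I_n.-1} :=
  [set j : 'I_n.-1 | (j \in BP) || (r (lo j) %| (bpos BP (lo j)).+1)%N].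

(* Main.v *)
Require Import Defs.
From mathcomp Require Import all_boot all_order all_fingroup all_algebra.
From mathcomp Require Import zify ring lra.
Import Order.TTheory GRing.Theory Num.Theory.
Local Open Scope ring_scope.
Set Implicit Arguments. Unset Strict Implicit.

Section Sums.
Variable R : realFieldType.
Variable I : finType.

Lemma sum_ind_mul (k : I) (F : I -> R) : \sum_a (k == a)%:R * F a = F k.
Proof.
rewrite (bigD1 k) //= eqxx mul1r big1 ?addr0 // => a /negbTE.
by rewrite eq_sym => ->; rewrite mul0r.
Qed.

Lemma sum_ind_pred (P : pred I) (k : I) : \sum_(b | P b) ((b == k)%:R : R) = (P k)%:R.
Proof.
rewrite big_mkcond /= -(sum_ind_mul k (fun b => (P b)%:R)).
by apply: eq_bigr => b _; rewrite eq_sym; case: (P b); case: (k == b); rewrite ?mulr1 ?mulr0 ?mul1r ?mul0r.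
Qed.

Lemma sum_one_pred (P : pred I) : \sum_(b | P b) (1 : R) = \sum_b (P b)%:R.
Proof. by rewrite big_mkcond /=; apply: eq_bigr => b _; case: (P b). Qed.

Lemma sum_const_pred (P : pred I) (c : R) : \sum_(b | P b) c = c * #|[pred b | P b]|%:R.
Proof.
rewrite (_ : #|[pred b | P b]| = #|P|); last exact: eq_card.
by rewrite mulr_natr -sumr_const; apply: eq_bigl.
Qed.

Lemma sum_ind_lt (P Q : pred I) (a0 : I) :
  (forall a, P a -> Q a) -> ~~ P a0 -> Q a0 ->
  \sum_a ((P a)%:R : R) < \sum_a (Q a)%:R.
Proof.
move=> PQ nP Q0; rewrite (bigD1 a0) //= [X in _ < X](bigD1 a0) //= (negbTE nP) Q0.
rewrite add0r ltr_pwDl ?ltr01 //; apply: ler_sum => a _.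
by case: (boolP (P a)) => [/PQ -> | _] //=; case: (Q a).
Qed.

Lemma sum_ind_le (P Q : pred I) :
  (forall a, P a -> Q a) -> \sum_a ((P a)%:R : R) <= \sum_a (Q a)%:R.
Proof.
move=> PQ; apply: ler_sum => a _.
by case: (boolP (P a)) => [/PQ -> | _] //=; case: (Q a).
Qed.

Lemma card_pred_gt0 (P : pred I) (p : I) : P p -> (0 : R) < #|[pred b | P b]|%:R.
Proof. move=> Pp; rewrite ltr0n; apply/card_gt0P; by exists p. Qed.

Lemma avg_lt (P Q : pred I) (f : I -> R) (p q : I) : P p -> Q q ->
  (forall a b, P a -> Q b -> f b < f a) ->
  (#|[pred b | Q b]|%:R)^-1 * \sum_(b | Q b) f b <
  (#|[pred a | P a]|%:R)^-1 * \sum_(a | P a) f a.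
Proof.
move=> Pp Qq H.
have cP := card_pred_gt0 Pp; have cQ := card_pred_gt0 Qq.
set cp := (#|[pred a | P a]|%:R : R) in cP *; set cq := (#|[pred a | Q a]|%:R : R) in cQ *.
have key : 0 < cq * \sum_(a | P a) f a - cp * \sum_(b | Q b) f b.
  have -> : cq * \sum_(a | P a) f a - cp * \sum_(b | Q b) f b =
            \sum_(a | P a) \sum_(b | Q b) (f a - f b).
    have -> : \sum_(a | P a) \sum_(b | Q b) (f a - f b) =
              \sum_(a | P a) (f a * cq - \sum_(b | Q b) f b).
      by apply: eq_bigr => a _; rewrite sumrB sum_const_pred.
    rewrite sumrB -mulr_suml sum_const_pred -/cp; ring.
  rewrite (bigD1 p) //= ltr_pwDl //.
    by rewrite (bigD1 q) //= ltr_pwDl ?subr_gt0 ?H // sumr_ge0 // => b /andP[Qb _]; rewrite subr_ge0 ltW ?H.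
  apply: sumr_ge0 => a /andP[Pa _]; apply: sumr_ge0 => b Qb; rewrite subr_ge0 ltW ?H //.
have ip : 0 < cp^-1 by rewrite invr_gt0.
have iq : 0 < cq^-1 by rewrite invr_gt0.
rewrite -subr_gt0.
have -> : cp^-1 * \sum_(a | P a) f a - cq^-1 * \sum_(b | Q b) f b =
   cp^-1 * cq^-1 * (cq * \sum_(a | P a) f a - cp * \sum_(b | Q b) f b).
  by field; apply/andP; split; rewrite gt_eqF.
by rewrite !mulr_gt0.
Qed.
End Sums.
Section Blk.
Variable n : nat.
Implicit Types (B : {set 'I_n.-1}) (i k l a b c d : 'I_n).

Lemma sb_refl B i : sameblk B i i.
Proof. apply/forallP => j; apply/implyP => _; rewrite minnn maxnn; lia. Qed.

Lemma sb_sym B i k : sameblk B i k = sameblk B k i.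
Proof. by rewrite /sameblk minnC maxnC. Qed.

Lemma sb_trans B i k l : sameblk B i k -> sameblk B k l -> sameblk B i l.
Proof.
move=> /forallP H1 /forallP H2; apply/forallP => j; apply/implyP => jB.
move: (H1 j) (H2 j); rewrite jB /= => h1 h2; lia.
Qed.

Lemma sb_break B i k : ~~ sameblk B i k ->
  exists2 j : 'I_n.-1, j \in B & ((minn i k <= j) && (j < maxn i k))%N.
Proof.
rewrite negb_forall => /existsP [j]; rewrite negb_imply => /andP [jB h].
by exists j => //; rewrite negbK in h.
Qed.

Lemma sb_order B a b c d : sameblk B a b -> sameblk B c d -> (a < c)%N ->
  ~~ sameblk B a c -> (b < d)%N.
Proof.
move=> /forallP H1 /forallP H2 ac /sb_break [j jB hj].
move: (H1 j) (H2 j); rewrite jB /= => h1 h2; lia.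
Qed.

Lemma sb_interval B a b c : (a <= b)%N -> (b <= c)%N -> sameblk B a c -> sameblk B a b.
Proof.
move=> ab bc /forallP H; apply/forallP => j; apply/implyP => jB.
move: (H j); rewrite jB /= => h; lia.
Qed.

Lemma sb_mono B1 B2 i k : B1 \subset B2 -> sameblk B2 i k -> sameblk B1 i k.
Proof.
move=> /subsetP S /forallP H; apply/forallP => j; apply/implyP => jB.
by move: (H j); rewrite (S _ jB).
Qed.
End Blk.

Section Main.
Variables (R : realFieldType) (n : nat) (BP BQ BR : {set 'I_n.-1}) (r : 'I_n -> nat) (w : 'S_n).
Hypothesis hr1 : forall i k : 'I_n, sameblk BP i k -> r i = r k.
Hypothesis hr2 : forall i : 'I_n, (0 < r i)%N /\ (r i %| bsize BP i)%N.

Let S := Pw BP BQ w.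
Implicit Types (i k x y a b : 'I_n).

Lemma BP_sub_S : BP \subset S.
Proof. by apply/subsetP => j jB; rewrite inE jB. Qed.

Definition cc (a b : 'I_n) := [&& (a < b)%N, sameblk BP a b & ~~ sameblk S a b].
Definition vv (k : 'I_n) : R := 2^-1 * \sum_(a < n) \sum_(b < n | cc a b) rootvec R a b k.

Lemma rho_eq i : rho R S BP i = (bsize S i)%:R^-1 * \sum_(k | sameblk S i k) vv k.
Proof. by []. Qed.

Lemma vv_eq k : vv k = 2^-1 * (\sum_b ((cc k b)%:R : R) - \sum_a (cc a k)%:R).
Proof.
rewrite /vv /rootvec; congr (_ * _).
rewrite (eq_bigr (fun a => (k == a)%:R * \sum_(b | cc a b) (1 : R) - (cc a k)%:R)); last first.
  move=> a _; rewrite sumrB; congr (_ - _); first by rewrite sum_const_pred sum_const_pred mul1r.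
  by rewrite -sum_ind_pred; apply: eq_bigr => b _; rewrite eq_sym.
by rewrite sumrB sum_ind_mul sum_one_pred.
Qed.

Lemma vv_lt k (k' : 'I_n) : (k < k')%N -> sameblk BP k k' -> ~~ sameblk S k k' -> vv k' < vv k.
Proof.
move=> kk Pkk Skk; rewrite !vv_eq ltr_pM2l ?invr_gt0 ?ltr0n //.
have h1 : \sum_b ((cc k' b)%:R : R) < \sum_b (cc k b)%:R.
  apply: (@sum_ind_lt _ _ _ _ k').
  - move=> b /and3P [kb Pkb Skb]; apply/and3P; split.
    + exact: ltn_trans kk kb.
    + exact: sb_trans Pkk Pkb.
    + apply/negP => Skb'; move/negP: Skb; apply.
      have h : sameblk S k k' by apply: (sb_interval (c := b)) => //; [exact: ltnW | exact: ltnW].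
      by move/negP: Skk.
  - by rewrite /cc ltnn.
  - by rewrite /cc kk Pkk Skk.
have h2 : \sum_a ((cc a k)%:R : R) <= \sum_a (cc a k')%:R.
  apply: sum_ind_le => a /and3P [ak Pak Sak]; apply/and3P; split.
  + exact: ltn_trans ak kk.
  + exact: sb_trans Pak Pkk.
  + apply/negP => Sak'; move/negP: Sak; apply.
    by apply: (sb_interval (c := k')) => //; [exact: ltnW | exact: ltnW].
lra.
Qed.

Lemma rho_lt x y : (x < y)%N -> sameblk BP x y -> ~~ sameblk S x y ->
  rho R S BP y < rho R S BP x.
Proof.
move=> xy Pxy Sxy; rewrite !rho_eq /bsize.
apply: (avg_lt (P := sameblk S x) (Q := sameblk S y) (p := x) (q := y)); try exact: sb_refl.
move=> a b Sxa Syb.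
have ab : (a < b)%N by apply: (sb_order Sxa Syb xy Sxy).
apply: vv_lt => //.
  have Pxa := sb_mono BP_sub_S Sxa; have Pyb := sb_mono BP_sub_S Syb.
  by apply: sb_trans (sb_trans _ Pyb) ; [rewrite sb_sym; exact: Pxa | exact: Pxy].
apply/negP => Sab; move/negP: Sxy; apply.
by apply: sb_trans (sb_trans Sab _); [exact: Sxa | rewrite sb_sym].
Qed.

Lemma nu_lt x y : (x < y)%N -> sameblk BP x y -> ~~ sameblk S x y ->
  nu R BP r S x < nu R BP r S y.
Proof.
move=> xy Pxy Sxy; rewrite /nu (hr1 Pxy) !mulNr ltrN2 ltr_pM2r ?invr_gt0 ?ltr0n ?(hr2 y).1 //.
exact: rho_lt.
Qed.
End Main.

Section Block.
Variables (R : realFieldType) (n : nat).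
Implicit Types (i k x y : 'I_n) (B : {set 'I_n.-1}).

Lemma bpos B i : (0 : R) < (bsize B i)%:R.
Proof. exact: (@card_pred_gt0 R _ (sameblk B i) i (sb_refl B i)). Qed.

Lemma bsize_eq B x k : sameblk B x k -> bsize B k = bsize B x.
Proof.
move=> xk; apply: eq_card => k' /=; apply/idP/idP => h.
  exact: sb_trans xk h.
by apply: sb_trans h; rewrite sb_sym.
Qed.

Lemma block_sum_zero B (t z : 'I_n -> R) :
  (forall x y, sameblk B x y -> t x = t y) ->
  (forall i, \sum_(k | sameblk B i k) z k = 0) -> \sum_x t x * z x = 0.
Proof.
move=> tc hz.
have e1 : forall x, t x * z x = \sum_(k | sameblk B x k) (bsize B k)%:R^-1 * t k * z x.
  move=> x; rewrite (eq_bigr (fun k => (bsize B x)%:R^-1 * t x * z x)); last first.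
    by move=> k xk; rewrite -(tc _ _ xk) (bsize_eq xk).
  have hb := bpos B x; rewrite sum_const_pred; rewrite /bsize in hb *.
  by field; rewrite gt_eqF.
rewrite (eq_bigr (fun x => \sum_(k | sameblk B x k) (bsize B k)%:R^-1 * t k * z x)); last by move=> x _; exact: e1.
transitivity (\sum_x \sum_k (if sameblk B x k then (bsize B k)%:R^-1 * t k * z x else 0)).
  by apply: eq_bigr => x _; rewrite big_mkcond.
rewrite exchange_big /=; apply: big1 => k _.
transitivity ((bsize B k)%:R^-1 * t k * \sum_(x | sameblk B k x) z x).
  rewrite mulr_sumr [RHS]big_mkcond; apply: eq_bigr => x _; rewrite sb_sym.
  by case: ifP.
by rewrite hz mulr0.
Qed.
End Block.

Lemma Pw_chain n (BP BQ : {set 'I_n.-1}) (w : 'S_n) (x y : 'I_n) :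
  (x <= y)%N -> sameblk (Pw BP BQ w) x y -> sameblk BQ (w x) (w y).
Proof.
move=> xy Hs.
suff H : forall m (k : 'I_n), (x + m = k)%N -> (k <= y)%N -> sameblk BQ (w x) (w k).
  by apply: (H (y - x)%N) => //; lia.
elim=> [|m IH] k e ky.
  have -> : k = x by apply: val_inj; rewrite /= -e addn0.
  exact: sb_refl.
have hk1 : (x + m < n)%N by have := ltn_ord k; lia.
have := IH (Ordinal hk1) erefl ltac:(simpl; lia).
have hj : (x + m < n.-1)%N by have := ltn_ord k; lia.
pose j' : 'I_n.-1 := Ordinal hj.
have lo_j : lo j' = Ordinal hk1 by apply: val_inj.
have hi_j : hi j' = k by apply: val_inj => /=; lia.
have nj : j' \notin Pw BP BQ w.
  apply/negP => jin; move: (forallP Hs j'); rewrite jin /=.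
  have vj : (j' : nat) = (x + m)%N by [].
  move: vj; rewrite /=; lia.
move: nj; rewrite inE negb_or negbK => /andP [_ hq].
rewrite lo_j hi_j in hq => h; exact: sb_trans h hq.
Qed.

Unset Implicit Arguments.
Set Strict Implicit.

Theorem mainTheorem9 (R : realFieldType) (n : nat)
    (BP BQ BR : {set 'I_n.-1}) (r : 'I_n -> nat) (w : 'S_n) :
  (* data of pi ∈ Π_disc(M) (Moeglin–Waldspurger): r_i | n_i, constant on P-blocks *)
  (forall i k : 'I_n, sameblk BP i k -> r i = r k) ->
  (forall i : 'I_n, (0 < r i)%N /\ (r i %| bsize BP i)%N) ->
  (* Q ⊂ R *)
  BR \subset BQ ->
  (* w ∈ _Q W_P *)
  inWQP BQ BP w ->
  (* P_pi ⊂ P_w *)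
  Pw BP BQ w \subset Ppi BP r ->
  forall j : 'I_n.-1, j \in BR ->
  (* gamma^vee = proj_{a_R}(alpha_j^vee) ∈ Δ_R^vee ∩ w a_0^P *)
  (exists z : vec R n, in_a0 BP z /\
      forall i, proj BR (coroot R j) i = wact w z i) ->
  dot (wact w (nu R BP r (Pw BP BQ w))) (proj BR (coroot R j)) < 0.
Proof.
move=> hr1 hr2 hRQ hW _ j jR [z [za hz]].
set S := Pw BP BQ w.
set g := proj BR (coroot R j).
set nuv := nu R BP r S.
have zg : forall x, z x = g (w x) by move=> x; rewrite /g hz /wact permK.
have gE : forall i, g i = (bsize BR i)%:R^-1 *
    ((sameblk BR i (lo j))%:R - (sameblk BR i (hi j))%:R).
  by move=> i; rewrite /g /proj /coroot /rootvec sumrB !sum_ind_pred.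
have jsep : ~~ sameblk BR (lo j) (hi j).
  by apply/negP => /forallP /(_ j); rewrite jR /=; lia.
pose X x := sameblk BR (w x) (lo j).
pose Y x := sameblk BR (w x) (hi j).
have XY : forall x, X x -> ~~ Y x.
  move=> x Xx; apply/negP => Yx; move/negP: jsep; apply.
  by apply: sb_trans Yx; rewrite sb_sym.
have gX : forall x, X x -> 0 < z x.
  move=> x Xx; have nY := XY _ Xx; rewrite /X /Y in Xx nY.
  rewrite zg gE Xx (negbTE nY) subr0 mulr1 invr_gt0.
  exact: bpos.
have gY : forall x, Y x -> z x < 0.
  move=> x Yx; have nX : ~~ X x by apply/negP => /XY; rewrite Yx.
  rewrite /X /Y in Yx nX.
  rewrite zg gE Yx (negbTE nX) sub0r mulrN1 oppr_lt0 invr_gt0; exact: bpos.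
have gN : forall x, ~~ X x -> ~~ Y x -> z x = 0.
  by move=> x nX nY; rewrite /X /Y in nX nY; rewrite zg gE (negbTE nX) (negbTE nY) subrr mulr0.
have sep : forall x y, sameblk BP x y -> X x -> Y y -> nuv x < nuv y.
  move=> x y Pxy Xx Yy.
  have wxj : (w x <= j)%N.
    by move: (forallP Xx j); rewrite jR /=; lia.
  have wyj : (j < w y)%N.
    by move: (forallP Yy j); rewrite jR /=; lia.
  have xy : (x < y)%N.
    case: (ltngtP x y) => // h.
      by have := hW.1 y x h; rewrite sb_sym => /(_ Pxy); lia.
    have exy : x = y by apply: val_inj.
    by subst y; lia.
  have nS : ~~ sameblk S x y.
    apply/negP => Sxy; have := Pw_chain (ltnW xy) Sxy => /(sb_mono hRQ) Rw.
    move/negP: jsep; apply; rewrite /X /Y in Xx Yy.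
    by apply: sb_trans (sb_trans Rw Yy); rewrite sb_sym.
  exact: (nu_lt R hr1 hr2 xy Pxy nS).
pose d x := -1 - \sum_(y | sameblk BP x y) `|nuv y|.
pose t x := \big[Num.max/ d x]_(y | sameblk BP x y && X y) nuv y.
have tc : forall x y, sameblk BP x y -> t x = t y.
  move=> x y Pxy.
  have e : forall k, sameblk BP x k = sameblk BP y k.
    move=> k; apply/idP/idP => h; first by apply: sb_trans h; rewrite sb_sym.
    exact: sb_trans Pxy h.
  rewrite /t /d (eq_bigl _ _ e).
  by apply: eq_bigl => k; rewrite e.
have z0 : forall i, \sum_(k | sameblk BP i k) z k = 0.
  move=> i; have := za i; rewrite /proj => /eqP; rewrite mulf_eq0 invr_eq0.
  by rewrite (gt_eqF (bpos R BP i)) /= => /eqP.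
have tX : forall x, X x -> nuv x <= t x.
  move=> x Xx; rewrite /t (bigD1 x) /=; last by rewrite sb_refl Xx.
  by rewrite le_max lexx.
have tY : forall y, Y y -> t y < nuv y.
  move=> y Yy; apply: (big_ind (fun v => v < nuv y)).
  - have h1 : `|nuv y| <= \sum_(k | sameblk BP y k) `|nuv k|.
      rewrite (bigD1 y) ?sb_refl //= lerDl sumr_ge0 // => *; exact: normr_ge0.
    have h2 : - `|nuv y| <= nuv y by have := ler_norm (- nuv y); rewrite normrN; lra.
    rewrite /d; lra.
  - by move=> a b ha hb; rewrite gt_max ha hb.
  - move=> k /andP [Pyk Xk]; apply: sep => //; by rewrite sb_sym.
rewrite /dot.
rewrite (eq_bigr (fun i => nuv ((w^-1)%g i) * z ((w^-1)%g i))); last first.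
  by move=> i _; rewrite /g hz.
rewrite (reindex_inj (@perm_inj _ w)) /=.
rewrite (eq_bigr (fun x => nuv x * z x)); last by move=> x _; rewrite permK.
have -> : \sum_x nuv x * z x = \sum_x (nuv x - t x) * z x.
  have hb := block_sum_zero tc z0.
  transitivity (\sum_x ((nuv x - t x) * z x + t x * z x)).
    by apply: eq_bigr => x _; rewrite mulrBl subrK.
  by rewrite big_split /= hb addr0.
pose x0 := (w^-1)%g (hi j).
have Yx0 : Y x0 by rewrite /Y /x0 permKV sb_refl.
rewrite (bigD1 x0) //=.
have h1 : (nuv x0 - t x0) * z x0 < 0.
  by rewrite pmulr_rlt0; [exact: gY | rewrite subr_gt0 tY].
have h2 : \sum_(x | x != x0) (nuv x - t x) * z x <= 0.
  apply: sumr_le0 => x _.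
  case: (boolP (X x)) => Xx.
    by apply: mulr_le0_ge0; [rewrite subr_le0 tX | rewrite ltW ?gX].
  case: (boolP (Y x)) => Yx.
    by apply: mulr_ge0_le0; [rewrite subr_ge0 ltW ?tY | rewrite ltW ?gY].
  by rewrite gN // mulr0.
lra.
Qed.
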